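(* Let $\mathbb{F}$ be a field, $n,d\ge 1$, $X^1,\dots,X^d$ pairwise disjoint sets of variables $X^i=\{x^i_{jk}:j,k\in[n]\}$, $X=\bigcup_i X^i$, $A^i$ the $n\times n$ matrix with $(j,k)$ entry $x^i_{jk}$, and $f$ the $(1,1)$ entry of $A^1A^2\cdots A^d$. Then there exists a bijective partition $B:X\to Y\cup Z$ such that $\mathrm{maxrank}(M_{f^B})=n^{d-1}$.
   Context: $Y$ and $Z$ are disjoint sets of variables, and a bijective partition $B:X\to Y\cup Z$ is a bijection onto $Y\cup Z$; $f^B$ is $f$ with each $x$ replaced by $B(x)$. For $g\in\mathbb{F}[Y,Z]$, the polynomial coefficient matrix $M_g$ has rows indexed by monic multilinear monomials $p$ in $Y$ and columns by monic multilinear monomials $q$ in $Z$, with $M_g(p,q)=G$ iff $g=pq\,G+Q$ uniquely with $G$ containing only variables present in $p,q$ and $Q$ having no monomial divisible by $pq$ that contains only variables present in $p,q$. $\mathrm{maxrank}(M_g)=\max_{S:Y\cup Z\to\mathbb{F}}\mathrm{rank}(M_g|_S)$, where $M_g|_S$ evaluates entries at $S$. *)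

(* Defs.v *)
From HB Require Import structures.
From mathcomp Require Import all_boot all_order all_algebra.
From mathcomp Require Import mpoly.

Set Implicit Arguments.
Unset Strict Implicit.
Unset Printing Implicit Defensive.

Import Order.TTheory GRing.Theory.
Local Open Scope ring_scope.

(* The variable set X = { x^i_{jk} : i in [d], j,k in [n] } as a finite type.
   (Indices are 0-based: i : 'I_d, j k : 'I_n.) *)
Definition Xvar (d n : nat) : finType := ('I_d * 'I_n * 'I_n)%type.

(* Polynomials in the variables X: variable number r stands for enum_val r. *)
Definition XPoly (F : fieldType) (d n : nat) := {mpoly F[#|Xvar d n|]}.

Definition xv (F : fieldType) (d n : nat) (i : 'I_d) (j k : 'I_n) : XPoly F d n :=
  'X_(enum_rank ((i, j, k) : Xvar d n)).

Definition Amat (F : fieldType) (d n : nat) (i : 'I_d) : 'M[XPoly F d n]_n :=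
  \matrix_(j, k) @xv F d n i j k.

(* f = the (1,1) entry (index 0 here) of A^1 A^2 ... A^d *)
Definition f_entry11 (F : fieldType) (d n : nat) (hn : (0 < n)%N) : XPoly F d n :=
  (\prod_(i < d) @Amat F d n i) (Ordinal hn) (Ordinal hn).

(* Variables Y ∪ Z: Y = {y_0,..,y_{p-1}} are the indices lshift q a (a : 'I_p),
   Z = {z_0,..,z_{q-1}} are the indices rshift p b (b : 'I_q) of 'I_(p+q). *)
Definition yvar (p q : nat) (a : 'I_p) : 'I_(p + q) := lshift q a.
Definition zvar (p q : nat) (b : 'I_q) : 'I_(p + q) := rshift p b.

Definition substB (F : fieldType) (d n p q : nat) (B : Xvar d n -> 'I_(p + q))
    (f : XPoly F d n) : {mpoly F[p + q]} :=
  mmap (@mpolyC _ F) (fun r => 'X_(B (enum_val r))) f.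

(* The set of variables of the monic multilinear monomial P(y) * Q(z),
   where P ⊆ Y and Q ⊆ Z. *)
Definition pqvars (p q : nat) (P : {set 'I_p}) (Q : {set 'I_q}) : {set 'I_(p + q)} :=
  (@yvar p q @: P) :|: (@zvar p q @: Q).

Definition mlin (N : nat) (U : {set 'I_N}) : 'X_{1..N} :=
  [multinom (i \in U : nat) | i < N].

(* The entry M_g(P,Q): the unique G with g = pq G + Q', G only in the variables
   of pq, and Q' without monomials divisible by pq using only variables of pq. *)
Definition pcm_entry (F : fieldType) (p q : nat) (g : {mpoly F[p + q]})
    (P : {set 'I_p}) (Q : {set 'I_q}) : {mpoly F[p + q]} :=
  let U := pqvars P Q in
  \sum_(m <- msupp g |
          ((mlin U <= m)%MM && [forall i, (i \notin U) ==> (m i == 0%N)]))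
     g@_m *: 'X_[(m - mlin U)%MM].

(* M_g |_S : the polynomial coefficient matrix evaluated at S : Y ∪ Z -> F.
   Rows are indexed by subsets of Y (monic multilinear monomials in Y),
   columns by subsets of Z, enumerated via enum_val. *)
Definition pcm_eval (F : fieldType) (p q : nat) (g : {mpoly F[p + q]})
    (S : 'I_(p + q) -> F) : 'M[F]_(#|{set 'I_p}|, #|{set 'I_q}|) :=
  \matrix_(a, b) (pcm_entry g (enum_val a) (enum_val b)).@[S].

Definition maxrank_is (F : fieldType) (p q : nat) (g : {mpoly F[p + q]}) (r : nat) :
    Prop :=
  (exists S : 'I_(p + q) -> F, \rank (pcm_eval g S) = r) /\
  (forall S : 'I_(p + q) -> F, (\rank (pcm_eval g S) <= r)%N).

(* Main.v *)
From HB Require Import structures.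
From mathcomp Require Import all_boot all_order all_algebra.
From mathcomp Require Import mpoly.
Require Import Defs.
Set Implicit Arguments.
Unset Strict Implicit.
Unset Printing Implicit Defensive.
Import Order.TTheory GRing.Theory.
Local Open Scope ring_scope.
Definition ext (n m : nat) (a b : 'I_n) (t : {ffun 'I_m -> 'I_n}) (k : nat) : 'I_n :=
  if k is k'.+1 then (if insub k' is Some o then t o else b) else a.

Arguments ext : simpl never.
Lemma ext_lt n m a b (t : {ffun 'I_m -> 'I_n}) (o : 'I_m) : ext a b t o.+1 = t o.
Proof. rewrite /ext; case: insubP => [u _ Hu|]; last by rewrite ltn_ord.
by congr (t _); apply: val_inj. Qed.

Lemma ext_S n m a b (t : {ffun 'I_m -> 'I_n}) k (h : (k < m)%N) : ext a b t k.+1 = t (Ordinal h).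
Proof. exact: (ext_lt a b t (Ordinal h)). Qed.

Lemma ext_last n m a b (t : {ffun 'I_m -> 'I_n}) : ext a b t m.+1 = b.
Proof. by rewrite /ext insubF // ltnn. Qed.

Lemma ext0 n m a b (t : {ffun 'I_m -> 'I_n}) : ext a b t 0 = a.
Proof. by []. Qed.

Lemma sum_ffunS (R : nmodType) (T : finType) m (G : {ffun 'I_m.+1 -> T} -> R) :
  \sum_(t : {ffun 'I_m.+1 -> T}) G t =
  \sum_(c : T) \sum_(t : {ffun 'I_m -> T})
     G [ffun i : 'I_m.+1 => if unlift ord_max i is Some j then t j else c].
Proof.
rewrite pair_big /=.
pose h (u : T * {ffun 'I_m -> T}) : {ffun 'I_m.+1 -> T} :=
  [ffun i : 'I_m.+1 => if unlift ord_max i is Some j then u.2 j else u.1].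
pose hi (t : {ffun 'I_m.+1 -> T}) : T * {ffun 'I_m -> T} :=
  (t ord_max, [ffun j => t (lift ord_max j)]).
rewrite (reindex h) //=.
exists hi => [[c u] _|t _]; rewrite /h /hi /=.
  by rewrite ffunE unlift_none; congr pair; apply/ffunP=> j; rewrite !ffunE liftK.
apply/ffunP=> i; rewrite ffunE; case: unliftP => [j ->|->]; last by [].
by rewrite ffunE.
Qed.

Lemma prod_path (R : pzRingType) n (M : nat -> 'M[R]_n) m (a b : 'I_n) :
  (\prod_(i < m.+1) M i) a b =
  \sum_(t : {ffun 'I_m -> 'I_n}) \prod_(i < m.+1) M i (ext a b t i) (ext a b t i.+1).
Proof.
elim: m b => [|m IH] b.
  rewrite big_ord1 (big_pred1 [ffun x => b]) ?big_ord1 ?(ext_last a b [ffun=> b]) //.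
  move=> t; rewrite /=; symmetry; apply/eqP/ffunP => -[m] //.
rewrite (big_ord_recr m.+1) /= -mulmxE mxE sum_ffunS; apply: eq_bigr => c _.
rewrite IH mulr_suml; apply: eq_bigr => t _.
rewrite (big_ord_recr m.+1); congr (_ * _).
  apply: eq_bigr => i _.
  have E k : (k <= m.+1)%N -> ext a b [ffun i0 : 'I_m.+1 => if unlift ord_max i0 is Some j then t j else c] k = ext a c t k.
    case: k => [//|k] Hk; rewrite (ext_S _ _ _ Hk) ffunE.
    case: unliftP => [j /(congr1 val)|/(congr1 val) /= ->].
      move=> /= ->; rewrite /bump leqNgt ltn_ord add0n.
      exact/esym/(ext_lt a c t j).
    by rewrite ext_last.
  by rewrite !E //= ltnW // ltnS.
by rewrite (ext_lt _ _ _ ord_max) ffunE unlift_none ext_last.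
Qed.

Section PCM.
Variables (F : fieldType) (p q : nat).

Lemma mlin_inj N : injective (@mlin N).
Proof.
move=> U V h; apply/setP => i; have := congr1 (fun m : 'X_{1..N} => m i) h.
by rewrite /= /mlin !mnmE; case: (i \in U); case: (i \in V).
Qed.

Lemma mlin_cond N (U V : {set 'I_N}) :
  ((mlin U <= mlin V)%MM && [forall i, (i \notin U) ==> (mlin V i == 0%N)]) = (V == U).
Proof.
apply/idP/eqP => [/andP [/mnm_lepP H1 /forallP H2]|->].
  apply/eqP; rewrite eqEsubset; apply/andP; split; apply/subsetP => i Hi.
    apply/negPn/negP => Hn; have := H2 i; rewrite Hn /mlin mnmE Hi /=.
    by move/eqP.
  by have := H1 i; rewrite /mlin !mnmE Hi; case: (i \in V).
rewrite (_ : (mlin U <= mlin U)%MM) /=; last by apply/mnm_lepP => i.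
apply/forallP => i; apply/implyP => Hi.
by rewrite /mlin mnmE (negbTE Hi).
Qed.

Lemma pcm_entry_ml (g : {mpoly F[p + q]}) P Q :
  (forall m, m \in msupp g -> exists V, m = mlin V) ->
  pcm_entry g P Q = (g@_(mlin (pqvars P Q)))%:MP.
Proof.
move=> Hml; rewrite /pcm_entry; set U := pqvars P Q.
rewrite big_seq_cond (eq_bigl (fun m => (m \in msupp g) && (m == mlin U))); last first.
  move=> m /=; case: (boolP (m \in msupp g)) => //= Hm.
  by have [V ->] := Hml m Hm; rewrite mlin_cond (inj_eq (@mlin_inj _)).
rewrite big_mkcond /=.
have E0 : (mlin U - mlin U)%MM = 0%MM by apply/mnmP=> i; rewrite !mnmE subnn.
case: (boolP (mlin U \in msupp g)) => H.
  rewrite (bigD1_seq (mlin U)) ?msupp_uniq //= H eqxx /= E0 mpolyX0 -alg_mpolyC big1 ?addr0 //.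
  by move=> m /negbTE ->; rewrite andbF.
rewrite big1 ?memN_msupp_eq0 ?mpolyC0 // => m _.
by case: (boolP (m \in msupp g)) => //= Hm; case: eqP => // Em; rewrite -Em Hm in H.
Qed.

Lemma pqvars_y (P : {set 'I_p}) (Q : {set 'I_q}) : [set a | yvar q a \in pqvars P Q] = P.
Proof.
apply/setP => a; rewrite !inE mem_imset; last exact: lshift_inj.
case: (a \in P) => //=; apply/imsetP => -[b _ /eqP].
by rewrite /yvar /zvar eq_lrshift.
Qed.

Lemma pqvars_z (P : {set 'I_p}) (Q : {set 'I_q}) : [set b | zvar p b \in pqvars P Q] = Q.
Proof.
apply/setP => b; rewrite !inE (mem_imset _ _ (@rshift_inj p q)) orbC.
case: (b \in Q) => //=; apply/imsetP => -[a _ /eqP].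
by rewrite /yvar /zvar eq_sym eq_lrshift.
Qed.

Lemma pqvars_pre (V : {set 'I_(p + q)}) :
  pqvars [set a | yvar q a \in V] [set b | zvar p b \in V] = V.
Proof.
apply/setP => k; rewrite -(splitK k); case: (split k) => [a|b] /=.
  rewrite !inE (mem_imset _ _ (@lshift_inj p q)) inE.
  case: (lshift q a \in V) => //=; apply/negP => /imsetP [b _ /eqP].
  by rewrite /zvar eq_lrshift.
rewrite !inE (mem_imset _ _ (@rshift_inj p q)) inE orbC.
case: (rshift p b \in V) => //=; apply/negP => /imsetP [a _ /eqP].
by rewrite /yvar eq_sym eq_lrshift.
Qed.

Lemma pqvars_eq (V : {set 'I_(p + q)}) P Q :
  (V == pqvars P Q) = ([set a | yvar q a \in V] == P) && ([set b | zvar p b \in V] == Q).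
Proof.
apply/eqP/andP => [->|[/eqP <- /eqP <-]]; last by rewrite pqvars_pre.
by rewrite pqvars_y pqvars_z.
Qed.
End PCM.

Lemma exists_B (T : finType) (A : pred T) :
  exists B : T -> 'I_(#|A| + #|[predC A]|)%N, bijective B /\
    (forall x, A x -> exists a, B x = yvar _ a) /\
    (forall x, ~~ A x -> exists b, B x = zvar _ b).
Proof.
pose Binv (k : 'I_(#|A| + #|[predC A]|)%N) : T :=
  match split k with inl a => enum_val a | inr b => enum_val b end.
have Hinj : injective Binv.
  move=> k1 k2; rewrite /Binv -{2}(splitK k1) -{2}(splitK k2).
  case: (split k1) => [a1|b1]; case: (split k2) => [a2|b2] //=.
  - by move/enum_val_inj => ->.
  - by move=> E; have := enum_valP a1; have := enum_valP b2; rewrite E inE => /negbTE ->.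
  - by move=> E; have := enum_valP a2; have := enum_valP b1; rewrite E inE => /negbTE ->.
  - by move/enum_val_inj => ->.
have Hc : (#|T| <= #|'I_(#|A| + #|[predC A]|)%N|)%N by rewrite card_ord cardC.
have [B K1 K2] := inj_card_bij Hinj Hc.
exists B; split; first by exists Binv.
split => x Hx.
  have Hx' : x \in A by [].
  exists (enum_rank_in Hx' x); rewrite -{1}(enum_rankK_in Hx' Hx').
  have -> : enum_val (enum_rank_in Hx' x) = Binv (lshift _ (enum_rank_in Hx' x)).
    by rewrite /Binv (unsplitK (inl _ _)).
  by rewrite K1.
have Hx' : x \in [predC A] by rewrite inE.
exists (enum_rank_in Hx' x); rewrite -{1}(enum_rankK_in Hx' Hx').
have -> : enum_val (enum_rank_in Hx' x) = Binv (rshift _ (enum_rank_in Hx' x)).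
  by rewrite /Binv (unsplitK (inr _ _)).
by rewrite K1.
Qed.

Lemma rank_RC (F : fieldType) m1 m2 N (R : 'M[F]_(m1,N)) (C : 'M_(N,m2)) :
  R^T *m R = 1%:M -> C *m C^T = 1%:M -> \rank (R *m C) = N.
Proof.
move=> hR hC; apply/eqP; rewrite eqn_leq (leq_trans (mxrankM_maxl _ _) (rank_leq_col _)) /=.
have H : (\rank (R^T *m (R *m C) *m C^T) <= \rank (R *m C))%N.
  exact: leq_trans (mxrankM_maxl _ _) (mxrankM_maxr _ _).
by move: H; rewrite !mulmxA hR mul1mx hC mxrank1.
Qed.

Lemma gram_one (F : fieldType) (S : finType) N (Y : 'I_N -> S) (hY : injective Y) :
  let R := \matrix_(a < #|S|, u < N) ((Y u == enum_val a)%:R : F) in R^T *m R = 1%:M.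
Proof.
move=> R; apply/matrixP => u v; rewrite !mxE.
rewrite (bigD1 (enum_rank (Y u))) //= big1 ?addr0.
  by rewrite !mxE enum_rankK eqxx mul1r (inj_eq hY) eq_sym.
move=> a Ha; rewrite !mxE; case: eqP => [E|]; last by rewrite mul0r.
by rewrite E enum_valK eqxx in Ha.
Qed.

Theorem lemma2 (F : fieldType) (n d : nat) (hn : (0 < n)%N) (hd : (0 < d)%N) :
  exists (p q : nat) (B : Xvar d n -> 'I_(p + q)),
    bijective B /\ @maxrank_is F p q (@substB F d n p q B (@f_entry11 F d n hn)) (n ^ d.-1).
Proof.
case: d hd => // d _.
pose A : pred (Xvar d.+1 n) := fun x => ~~ odd x.1.1.
have [B [bijB [HBy HBz]]] := exists_B A.
exists #|A|, #|[predC A]|, B; split => //.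
pose T := {ffun 'I_d -> 'I_n}.
pose z0 := Ordinal hn.
pose e (t : T) (k : nat) := ext z0 z0 t k.
pose c (t : T) (i : 'I_d.+1) := B (i, e t i, e t i.+1).
pose W (t : T) := [set c t i | i : 'I_d.+1].
have Bi := bij_inj bijB.
have c_inj t : injective (c t) by move=> i j /Bi [].
have HW t : (\sum_(i < d.+1) U_(c t i))%MM = mlin (W t).
  apply/mnmP => k; rewrite mnm_sumE /mlin mnmE.
  case: (boolP (k \in W t)) => [/imsetP [i0 _ ->]|Hk].
    rewrite (bigD1 i0) //= mnm1E eqxx big1 // => i Hi; rewrite mnm1E.
    by rewrite (inj_eq (c_inj t)) (negbTE Hi).
  rewrite big1 // => i _; rewrite mnm1E; case: eqP => // E.
  by rewrite -E imset_f in Hk.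
set g := substB _ _.
have Hg : g = \sum_(t : T) 'X_[mlin (W t)].
  rewrite /g /f_entry11 /substB.
  have -> : \prod_(i < d.+1) @Amat F d.+1 n i =
            \prod_(i < d.+1) (fun k : nat => @Amat F d.+1 n (inord k)) i.
    by apply: eq_bigr => i _; rewrite inord_val.
  rewrite (prod_path (fun k : nat => @Amat F d.+1 n (inord k))) rmorph_sum.
  apply: eq_bigr => t _; rewrite -HW (big_morph _ (@mpolyXD _ F) (@mpolyX0 _ F)).
  rewrite rmorph_prod; apply: eq_bigr => i _.
  by rewrite mxE inord_val /xv /= mmapX mmap1U enum_rankK.
have Hcoef U : g@_(mlin U) = \sum_(t : T) ((W t == U)%:R : F).
  rewrite Hg raddf_sum; apply: eq_bigr => t _.
  by rewrite /= mcoeffX (inj_eq (@mlin_inj _)).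
have Hml m : m \in msupp g -> exists V, m = mlin V.
  case: (pickP (fun t : T => mlin (W t) == m)) => [t /eqP <-|H0]; first by exists (W t).
  rewrite mcoeff_msupp Hg raddf_sum big1 ?eqxx // => t _.
  by rewrite /= mcoeffX H0.
have key (par : pred nat) s t : (forall k, par k || par k.+1) ->
    (forall i : 'I_d.+1, par i -> c s i \in W t) -> s = t.
  move=> Hpar H; apply/ffunP => o.
  have Hi (i : 'I_d.+1) : par i -> e s i = e t i /\ e s i.+1 = e t i.+1.
    move=> /H /imsetP [i' _ /Bi [E1 E2 E3]].
    by rewrite E2 E3 E1.
  have Ho1 : (o < d.+1)%N by rewrite ltnW // ltnS.
  have Ho2 : (o.+1 < d.+1)%N by rewrite ltnS.
  case/orP: (Hpar o) => Hp.
    have [_ h2] := Hi (Ordinal Ho1) Hp.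
    by rewrite -(ext_lt z0 z0 s o) -(ext_lt z0 z0 t o).
  have [h1 _] := Hi (Ordinal Ho2) Hp.
  by rewrite -(ext_lt z0 z0 s o) -(ext_lt z0 z0 t o).
pose Y (t : T) := [set a | yvar #|[predC A]| a \in W t].
pose Z (t : T) := [set b | zvar #|A| b \in W t].
have Yinj : injective (fun u : 'I_#|T| => Y (enum_val u)).
  move=> u v /= E; apply: enum_val_inj; apply: (key (fun k => ~~ odd k)).
    by move=> k /=; rewrite negbK; case: odd.
  move=> i Hp; have [a Ha] := HBy (i, e (enum_val u) i, e (enum_val u) i.+1) Hp.
  have : a \in Y (enum_val u) by rewrite inE -Ha imset_f.
  by rewrite E inE -/(c _ i) -Ha.
have Zinj : injective (fun u : 'I_#|T| => Z (enum_val u)).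
  move=> u v /= E; apply: enum_val_inj; apply: (key (fun k => odd k)).
    by move=> k /=; case: odd.
  move=> i Hp; have HA : ~~ A (i, e (enum_val u) i, e (enum_val u) i.+1) by rewrite /A /= Hp.
  have [b Hb] := HBz _ HA.
  have : b \in Z (enum_val u) by rewrite inE -Hb imset_f.
  by rewrite E inE -/(c _ i) -Hb.
pose R := \matrix_(a < #|{set 'I_#|A|}|, u < #|T|) ((Y (enum_val u) == enum_val a)%:R : F).
pose R' := \matrix_(b < #|{set 'I_#|[predC A]|}|, u < #|T|) ((Z (enum_val u) == enum_val b)%:R : F).
have HM S : pcm_eval g S = R *m R'^T.
  apply/matrixP => a b; rewrite !mxE (pcm_entry_ml _ _ Hml) mevalC Hcoef.
  rewrite (reindex (enum_val : 'I_#|T| -> T)); last exact: onW_bij _ (enum_val_bij _).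
  apply: eq_bigr => u _; rewrite !mxE pqvars_eq.
  by case: (_ == _); case: (_ == _); rewrite /= ?mul1r ?mul0r.
have Hr S : \rank (pcm_eval g S) = (n ^ d)%N.
  rewrite HM rank_RC ?card_ffun ?card_ord //; first exact: gram_one.
  rewrite trmxK; exact: gram_one.
by split; [exists (fun _ => 0); rewrite Hr | move=> S; rewrite Hr].
Qed.
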